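(* Let $q$ be a prime power, $v\ge 2$, and let $u\in\mathbb{Z}$, $m\ge0$ and $\Delta\ge1$ be integers. Let $\mathcal{C}$ be a set of points of $\mathrm{PG}(v-1,q)$ with $|\mathcal{C}\cap H|\equiv u\pmod{\Delta}$ for every hyperplane $H$ and with cardinality $n=u+m\Delta\ge0$. Then $$(q-1)\cdot\sum_{h\in\mathbb{Z},\,h\le m} h\,a_{u+h\Delta}=\left(u+m\Delta-uq\right)\cdot\frac{q^{v-1}}{\Delta}-m,$$ where $a_i$ denotes the number of hyperplanes $H$ with $|\mathcal{C}\cap H|=i$, and $a_{u+h\Delta}:=0$ whenever $u+h\Delta<0$.
   Context: $\mathrm{PG}(v-1,q)$ is the set of $1$-dimensional subspaces (points) of $\mathbb{F}_q^v$; hyperplanes are the $(v-1)$-dimensional subspaces of $\mathbb{F}_q^v$, and $\mathcal{C}\cap H$ is the set of points of $\mathcal{C}$ contained in $H$. *)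

(* Defs.v *)
From HB Require Import structures.
From mathcomp Require Import all_boot all_order all_algebra all_field.
Set Implicit Arguments. Unset Strict Implicit. Unset Printing Implicit Defensive.
Import Order.TTheory GRing.Theory Num.Theory.

(* Subspaces of F^v are represented canonically by square matrices A with
   <<A>> = A (mxalgebra's canonical representative of a row space). *)
Section PG.
Variables (F : finFieldType) (v : nat).

Definition is_subspace (A : 'M[F]_v) : bool := (<<A>>%MS == A).

Definition is_point (A : 'M[F]_v) : bool := is_subspace A && (\rank A == 1%N).

Definition is_hyperplane (A : 'M[F]_v) : bool :=
  is_subspace A && (\rank A == v.-1).

Definition capH (C : {set 'M[F]_v}) (H : 'M[F]_v) : {set 'M[F]_v} :=
  [set P in C | (P <= H)%MS].

Definition spec_a (C : {set 'M[F]_v}) (i : nat) : nat :=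
  #|[set H : 'M[F]_v | is_hyperplane H & #|capH C H| == i]|.

Definition spec_aZ (C : {set 'M[F]_v}) (i : int) : nat :=
  match i with Posz n => spec_a C n | Negz _ => 0%N end.

End PG.

(* \sum_{h in Z, h <= m} h * a_{u + h Delta}.  Terms with h < -|u| vanish
   (since Delta >= 1 gives u + h Delta < 0), so the sum is taken over
   h = m, m-1, ..., -|u|. *)
Definition weighted_sum (F : finFieldType) (v : nat) (C : {set 'M[F]_v})
    (u : int) (m Delta : nat) : int :=
  \sum_(0 <= k < m + `|u| + 1)
     ((m%:Z - k%:Z) * (spec_aZ C (u + (m%:Z - k%:Z) * Delta%:Z))%:Z)%R.

(* Main.v *)
Require Import Defs.
From HB Require Import structures.
From mathcomp Require Import all_boot all_order all_algebra all_field.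
From mathcomp Require Import zify ring lra.
Import Order.TTheory GRing.Theory Num.Theory.
Local Open Scope ring_scope.

Section LinAlg.
Variables (F : finFieldType) (n : nat).
Local Notation q := #|F|.

Definition perp (A : 'M[F]_n) : 'M[F]_n := <<kermx A^T>>%MS.

Lemma perp_sub A : is_subspace (perp A).
Proof. by rewrite /is_subspace /perp genmx_id. Qed.

Lemma rank_perp A : \rank (perp A) = (n - \rank A)%N.
Proof. by rewrite /perp genmxE mxrank_ker mxrank_tr. Qed.

Lemma sub_kperp A : (A <= kermx (perp A)^T)%MS.
Proof.
by rewrite sub_kermx -trmx_eq0 trmx_mul trmxK -sub_kermx /perp genmxE.
Qed.

Lemma perpK A : is_subspace A -> perp (perp A) = A.
Proof.
move=> /eqP sA; rewrite -{2}sA /perp; apply: eq_genmx; apply/eqmx_sym/eqmxP.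
rewrite -(mxrank_leqif_eq (sub_kperp A)) mxrank_ker mxrank_tr.
by rewrite rank_perp subKn ?rank_leq_col.
Qed.

Lemma perp_leq A B : (A <= B)%MS -> (perp B <= perp A)%MS.
Proof.
move=> sAB; have := submx_trans sAB (sub_kperp B).
rewrite sub_kermx -trmx_eq0 trmx_mul trmxK -sub_kermx => h.
by rewrite [X in (_ <= X)%MS]/perp genmxE.
Qed.

Lemma card_rows m (A : 'M[F]_(m, n)) :
  #|[set x : 'rV[F]_n | (x <= A)%MS]| = (q ^ \rank A)%N.
Proof.
rewrite -[\rank A]mul1n -card_mx.
have injA: injective (mulmxr (row_base A)).
  have /row_freeP[A' A'K] := row_base_free A.
  by move=> ?; apply: can_inj (mulmxr A') _ => u; rewrite /= -mulmxA A'K mulmx1.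
rewrite -(card_image (injA _)); apply: eq_card => v.
by rewrite inE -(eq_row_base A) (sameP submxP codomP).
Qed.

Lemma card_nz_rows (S : 'M[F]_n) :
  #|[set x : 'rV[F]_n | (x <= S)%MS & x != 0]| = (q ^ \rank S - 1)%N.
Proof.
rewrite -card_rows (cardsD1 0 [set x : 'rV[F]_n | (x <= S)%MS]) inE sub0mx add1n subSS subn0.
by apply: eq_card => x; rewrite !inE andbC.
Qed.

Lemma count_points (S : 'M[F]_n) :
  (q.-1 * #|[set P : 'M[F]_n | is_point P && (P <= S)%MS]| = q ^ \rank S - 1)%N.
Proof.
rewrite -card_nz_rows -[in RHS]sum1_card -(sum1_card (mem [set P : 'M[F]_n | is_point P && (P <= S)%MS])).
rewrite (partition_big (fun x : 'rV[F]_n => <<x>>%MS) (mem [set P : 'M[F]_n | is_point P && (P <= S)%MS])) /=; last first.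
  move=> x; rewrite !inE => /andP[xS nz].
  by rewrite /is_point /is_subspace (genmx_id x) eqxx genmxE rank_rV nz eqxx genmxE.
rewrite mulnC big_distrl /=; apply: eq_bigr => P; rewrite inE /is_point => /andP[/andP[sP rP] PS].
rewrite mul1n.
have -> : q.-1 = #|[set x : 'rV[F]_n | (x <= P)%MS & x != 0]|.
  by rewrite card_nz_rows (eqP rP) expn1 subn1.
rewrite -sum1_card; apply: eq_bigl => x; rewrite !inE.
apply/idP/idP; last first.
  case/andP=> /andP[xS nz] /eqP <-; rewrite nz andbT. by rewrite (genmxE x).
case/andP=> xP nz; rewrite (submx_trans xP PS) nz /=.
rewrite -(eqP sP); apply/eqP/eq_genmx/eqmxP.
by rewrite -(mxrank_leqif_eq xP) rank_rV nz (eqP rP).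
Qed.

Lemma count_hyp (P : 'M[F]_n) : is_subspace P -> (0 < n)%N ->
  (q.-1 * #|[set H : 'M[F]_n | is_hyperplane H && (P <= H)%MS]|
     = q ^ (n - \rank P) - 1)%N.
Proof.
move=> sP n0; rewrite -rank_perp -count_points; congr (_ * _)%N.
have inj : {in [set H : 'M[F]_n | is_hyperplane H && (P <= H)%MS] &, injective perp}.
  move=> H1 H2; rewrite !inE /is_hyperplane => /andP[/andP[s1 _] _] /andP[/andP[s2 _] _] e.
  by rewrite -(perpK H1 s1) e perpK.
rewrite -(card_in_imset inj); apply: eq_card => Q.
apply/imsetP/idP; rewrite inE.
  case=> H; rewrite inE /is_hyperplane => /andP[/andP[sH rH] PH] ->.
  rewrite /is_point perp_sub rank_perp (eqP rH) perp_leq // andbT.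
  by rewrite -subn1 subKn.
rewrite /is_point => /andP[/andP[sQ rQ] QP]; exists (perp Q); last by rewrite perpK.
rewrite inE /is_hyperplane perp_sub rank_perp (eqP rQ) subn1 eqxx /=.
by rewrite -(perpK P sP) perp_leq.
Qed.

Lemma is_subspace_0 : is_subspace (0 : 'M[F]_n).
Proof. by rewrite /is_subspace genmx0. Qed.

End LinAlg.
Arguments perp {F n}.
Arguments perp_sub {F n}.
Arguments rank_perp {F n}.
Arguments perpK {F n}.
Arguments perp_leq {F n}.
Arguments count_points {F n}.
Arguments count_hyp {F n}.
Arguments is_subspace_0 {F n}.

Lemma hsum (c : nat) (u : int) (m D : nat) : (0 < D)%N ->
  c%:Z <= u + m%:Z * D%:Z -> (c%:Z = u %[mod D%:Z])%Z ->
  (\sum_(0 <= k < m + `|u| + 1)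
     ((m%:Z - k%:Z) * (c%:Z == u + (m%:Z - k%:Z) * D%:Z)%:R)) * D%:Z
  = c%:Z - u.
Proof.
move=> D0 cle /eqP; rewrite eqz_mod_dvd => /dvdzP[h eh].
have hm : h <= m%:Z by nia.
have hu : - (`|u|%N%:Z) <= h by nia.
pose K := `|m%:Z - h|%N.
have eK : K%:Z = m%:Z - h by rewrite /K; lia.
rewrite (bigD1_seq K) /=; last by rewrite iota_uniq.
  rewrite big1 ?addr0; last first.
    move=> k kK; case: eqP => e; last by rewrite mulr0.
    exfalso; have : (h - (m%:Z - k%:Z)) * D%:Z = 0 by lia.
    move/eqP; rewrite mulf_eq0 => /orP[/eqP|/eqP]; lia.
  rewrite eK opprB addrC subrK.
  have -> : (c%:Z == u + h * D%:Z) by apply/eqP; lia.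
  by rewrite mulr1 eh.
by rewrite mem_iota; lia.
Qed.

Lemma aZ_sum (F : finFieldType) (v : nat) (C : {set 'M[F]_v}) (z : int) :
  (spec_aZ C z)%:Z =
  \sum_(H in [set H : 'M[F]_v | is_hyperplane H])
     ((#|capH C H|%:Z == z)%:R : int).
Proof.
case: z => [n|n] /=.
  rewrite /spec_a -sum1_card -natz natr_sum.
  rewrite big_mkcond [RHS]big_mkcond /=; apply: eq_bigr => H _.
  by rewrite !inE; case: (is_hyperplane H) => //=; rewrite eqz_nat; case: (_ == _).
by rewrite big1.
Qed.

Lemma card_capE (F : finFieldType) (v : nat) (C : {set 'M[F]_v}) (H : 'M[F]_v) :
  #|capH C H| = (\sum_(P in C) (P <= H)%MS)%N.
Proof.
rewrite -sum1_card big_mkcond [RHS]big_mkcond /=; apply: eq_bigr => P _.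
by rewrite /capH !inE; case: (P \in C); case: (P <= H)%MS.
Qed.

Theorem lemma5p3 (F : finFieldType) (v : nat) (u : int) (m Delta : nat)
    (C : {set 'M[F]_v}) :
  (2 <= v)%N -> (1 <= Delta)%N ->
  (forall P, P \in C -> is_point P) ->
  (forall H : 'M[F]_v, is_hyperplane H ->
     (#|capH C H|%:Z = u %[mod Delta%:Z])%Z) ->
  #|C|%:Z = u + m%:Z * Delta%:Z ->
  ((#|F|%:R - 1) * (weighted_sum C u m Delta)%:~R : rat)
    = (u + m%:Z * Delta%:Z - u * #|F|%:Z)%:~R * (#|F| ^ v.-1)%:R / Delta%:R
      - m%:R.
Proof.
move=> v2 D1 Cpts Hmod Ccard.
set q := #|F|.
have q0 : (0 < q)%N by apply/card_gt0P; exists 0.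
have v0 : (0 < v)%N by lia.
set Hs := [set H : 'M[F]_v | is_hyperplane H].
have NH : (q.-1 * #|Hs| = q ^ v - 1)%N.
  have := @count_hyp F v 0 is_subspace_0 v0.
  rewrite mxrank0 subn0 => <-; congr (_ * _)%N; apply: eq_card => H.
  by rewrite !inE sub0mx andbT.
have NP : forall P, P \in C ->
    (q.-1 * #|[set H : 'M[F]_v | is_hyperplane H && (P <= H)%MS]| = q ^ v.-1 - 1)%N.
  move=> P0 PC; have /andP[sP rP] := Cpts P0 PC.
  by rewrite /q count_hyp // (eqP rP) !subn1.
have Sum : (q.-1 * \sum_(H in Hs) #|capH C H| = #|C| * (q ^ v.-1 - 1))%N.
  have -> : (\sum_(H in Hs) #|capH C H| =
             \sum_(P in C) #|[set H : 'M[F]_v | is_hyperplane H && (P <= H)%MS]|)%N.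
    under eq_bigr do rewrite card_capE.
    rewrite exchange_big /=; apply: eq_bigr => P _.
    rewrite -sum1_card big_mkcond [RHS]big_mkcond /=; apply: eq_bigr => H _.
    by rewrite !inE; case: (is_hyperplane H); case: (P <= H)%MS.
  rewrite big_distrr /= (eq_bigr (fun _ => q ^ v.-1 - 1)%N); last by move=> P /NP.
  by rewrite sum_nat_const mulnC.
have WS : weighted_sum C u m Delta * Delta%:Z
          = \sum_(H in Hs) (#|capH C H|%:Z - u).
  rewrite /weighted_sum.
  under eq_bigr do rewrite aZ_sum mulr_sumr.
  rewrite exchange_big mulr_suml /=; apply: eq_bigr => H; rewrite inE => HH.
  rewrite -(@hsum _ u m Delta D1 _ (Hmod H HH)); last first.
    rewrite -Ccard lez_nat; apply: subset_leq_card; apply/subsetP => P.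
    by rewrite inE => /andP[].
  by [].
have qq : (q.-1)%:Z = q%:Z - 1 by lia.
have X1 : (0 < q ^ v.-1)%N by rewrite expn_gt0 q0.
have Sz : (q%:Z - 1) * (\sum_(H in Hs) #|capH C H|)%N%:Z
          = #|C|%:Z * ((q ^ v.-1)%N%:Z - 1).
  have := congr1 Posz Sum; nia.
have Nz : (q%:Z - 1) * #|Hs|%:Z = q%:Z * (q ^ v.-1)%N%:Z - 1.
  have ev : (q ^ v = q * q ^ v.-1)%N by rewrite -expnS prednK.
  have := congr1 Posz NH; rewrite ev; nia.
have WS2 : weighted_sum C u m Delta * Delta%:Z
           = (\sum_(H in Hs) #|capH C H|)%N%:Z - u * #|Hs|%:Z.
  rewrite WS sumrB sumr_const /=.
  congr (_ - _); first by rewrite -natz natr_sum; apply: eq_bigr => H _; rewrite natz.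
  by rewrite -mulr_natr natz.
have key : (q%:Z - 1) * (weighted_sum C u m Delta * Delta%:Z)
   = (u + m%:Z * Delta%:Z - u * q%:Z) * (q ^ v.-1)%N%:Z - m%:Z * Delta%:Z.
  rewrite WS2 mulrBr Sz mulrCA Nz Ccard; ring.
have keyQ := congr1 (fun z : int => (z%:~R : rat)) key.
rewrite /= !(intrM, intrD, intrB, intrN, =^~pmulrn) in keyQ.
have D0 : (Delta%:R : rat) != 0 by rewrite pnatr_eq0 -lt0n.
apply: (mulIf D0); rewrite [RHS]mulrBl divfK //.
rewrite !(intrM, intrD, intrB, intrN, =^~pmulrn).
by rewrite -mulrA keyQ.
Qed.
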